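(* Let $U$ be a nonempty finite set, $R\subseteq U\times U$ serial and transitive, and $r$ the rank function of $M(Reg(U,R))$. Let $n$ be an integer with $1\le n\le h(U)$, and let $X,Y\in Reg(U,R)$ with $h(X)=n$ and $h(Y)=n-1$. Then for every $Z\subseteq U$ with $Y\subsetneq Z\subsetneq X$, $r(Z)=h(X)$.
   Context: $R_s(x)=\{y\in U\mid xRy\}$; $\underline{R}(X)=\{x\mid R_s(x)\subseteq X\}$, $\overline{R}(X)=\{x\mid R_s(x)\cap X\neq\emptyset\}$; $X$ is regular if $X=\underline{R}(\overline{R}(X))$, and $Reg(U,R)$ is the lattice of regular sets under inclusion, with least element $\emptyset$. $h(A)$ is the length of a maximal chain in $[\emptyset,A]$. $M(Reg(U,R))$ is the matroid on $U$ with independent sets $\{X\subseteq U\mid h(Y)\ge|X\cap Y|\ \forall Y\in Reg(U,R)\}$ and rank function $r(X)=\max\{|I|\mid I\subseteq X \text{ independent}\}$. *)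

(* Defs.v *)
From mathcomp Require Import all_boot.
Set Implicit Arguments. Unset Strict Implicit. Unset Printing Implicit Defensive.

Section RoughSets.
Variables (T : finType) (R : rel T).

Definition Rs (x : T) : {set T} := [set y | R x y].
Definition lowerR (X : {set T}) : {set T} := [set x | Rs x \subset X].
Definition upperR (X : {set T}) : {set T} := [set x | Rs x :&: X != set0].
Definition regular (X : {set T}) : bool := X == lowerR (upperR X).

Definition chain_in (A : {set T}) (C : {set {set T}}) : bool :=
  [forall Y in C, regular Y && (set0 \subset Y) && (Y \subset A)] &&
  [forall Y in C, forall Z in C, (Y \subset Z) || (Z \subset Y)].

Definition h (A : {set T}) : nat :=
  \max_(C : {set {set T}} | chain_in A C) #|C|.-1.

Definition indep (X : {set T}) : bool :=
  [forall Y : {set T}, regular Y ==> (#|X :&: Y| <= h Y)].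

Definition rk (X : {set T}) : nat :=
  \max_(I : {set T} | (I \subset X) && indep I) #|I|.

End RoughSets.

(* Main.v *)
Require Import Defs.
From mathcomp Require Import all_boot.
Set Implicit Arguments. Unset Strict Implicit. Unset Printing Implicit Defensive.

Definition final (T : finType) (R : rel T) (f : T) := [forall y, R f y ==> R y f].

Lemma finalP (T : finType) (R : rel T) f : reflect (forall y, R f y -> R y f) (final R f).
Proof. apply: (iffP forallP) => H y; [exact/implyP/H | exact/implyP/H]. Qed.

Lemma inRs (T : finType) (R : rel T) x y : (y \in Rs R x) = R x y.
Proof. by rewrite inE. Qed.

Lemma final_refl (T : finType) (R : rel T) (hser : forall x : T, exists y : T, R x y)
  (htr : transitive R) f : final R f -> R f f.
Proof. move=> /finalP Hf; case: (hser f) => y Hy; exact: htr (Hf _ Hy). Qed.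

Lemma final_succ (T : finType) (R : rel T) (htr : transitive R) f y :
  final R f -> R f y -> final R y /\ Rs R y = Rs R f.
Proof.
move=> /finalP Hf Hfy; have Hyf := Hf _ Hfy; split.
  apply/finalP => w Hyw; exact: htr (Hf _ (htr _ _ _ Hfy Hyw)) Hfy.
apply/setP => w; rewrite !inRs; apply/idP/idP => H; [exact: htr H | exact: htr Hyf H].
Qed.

Lemma reach_final (T : finType) (R : rel T) (hser : forall x : T, exists y : T, R x y)
  (htr : transitive R) x : exists f, R x f && final R f.
Proof.
case: (hser x) => y0 Hy0.
case: (@arg_minnP _ y0 (R x) (fun y => #|Rs R y|) Hy0) => y Hxy Hmin.
case: (hser y) => z Hyz; exists z; rewrite (htr _ _ _ Hxy Hyz) /=.
apply/finalP => w Hzw.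
have Hyw := htr _ _ _ Hyz Hzw.
have Hsub : Rs R w \subset Rs R y by apply/subsetP => v; rewrite !inRs; exact: htr.
have : Rs R w == Rs R y by rewrite eqEcard Hsub Hmin // (htr _ _ _ Hxy Hyw).
by move/eqP => E; rewrite -inRs E inRs.
Qed.

Lemma regP (T : finType) (R : rel T) (hser : forall x : T, exists y : T, R x y)
  (htr : transitive R) W x : regular R W ->
  reflect (forall f, final R f -> R x f -> f \in W) (x \in W).
Proof.
move=> /eqP HW; apply: (iffP idP).
- move=> Hx f Hf Hxf; rewrite HW inE; apply/subsetP => y; rewrite inRs => Hfy.
  have [_ Ey] := final_succ htr Hf Hfy.
  move: Hx; rewrite {1}HW inE => /subsetP /(_ f); rewrite inRs => /(_ Hxf).
  by rewrite !inE Ey.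
- move=> H; rewrite HW inE; apply/subsetP => y; rewrite inRs => Hxy.
  case: (reach_final hser htr y) => f /andP [Hyf Hf].
  rewrite inE; apply/set0Pn; exists f; rewrite inE inRs Hyf /=.
  exact: H Hf (htr _ _ _ Hxy Hyf).
Qed.

Definition clusters (T : finType) (R : rel T) (W : {set T}) : {set {set T}} :=
  [set Rs R f | f in [set f in W | final R f]].

Lemma final_mem_cl (T : finType) (R : rel T) (hser : forall x : T, exists y : T, R x y)
  (htr : transitive R) W f : regular R W -> final R f ->
  (f \in W) = (Rs R f \in clusters R W).
Proof.
move=> HW Hf; apply/idP/idP => H.
  by apply/imsetP; exists f => //; rewrite inE H Hf.
case/imsetP: H => g; rewrite inE => /andP [Hg Hgf] E.
have Hff := final_refl hser htr Hf.
have : f \in Rs R g by rewrite -E inRs.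
rewrite inRs => Hgf'.
exact: (elimT (regP hser htr g HW) Hg) f Hf Hgf'.
Qed.

Lemma cl_sub (T : finType) (R : rel T) (hser : forall x : T, exists y : T, R x y)
  (htr : transitive R) W g : regular R W -> final R g -> g \in W -> Rs R g \subset W.
Proof.
move=> HW Hg HgW; apply/subsetP => y; rewrite inRs => Hgy.
have [Hy _] := final_succ htr Hg Hgy.
exact: (elimT (regP hser htr g HW) HgW) y Hy Hgy.
Qed.

Lemma clusters_inj (T : finType) (R : rel T) (hser : forall x : T, exists y : T, R x y)
  (htr : transitive R) W W' : regular R W -> regular R W' ->
  clusters R W = clusters R W' -> W = W'.
Proof.
move=> HW HW' E; apply/setP => x.
apply/idP/idP => Hx.
- apply/(regP hser htr x HW') => f Hf Hxf.
  rewrite (final_mem_cl hser htr HW' Hf) -E -(final_mem_cl hser htr HW Hf).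
  exact: (elimT (regP hser htr x HW) Hx) f Hf Hxf.
- apply/(regP hser htr x HW) => f Hf Hxf.
  rewrite (final_mem_cl hser htr HW Hf) E -(final_mem_cl hser htr HW' Hf).
  exact: (elimT (regP hser htr x HW') Hx) f Hf Hxf.
Qed.

Lemma clusters_mono (T : finType) (R : rel T) (W W' : {set T}) : W \subset W' ->
  clusters R W \subset clusters R W'.
Proof.
move=> /subsetP S; apply/subsetP => c /imsetP [f]; rewrite inE => /andP [Hf Hff] ->.
by apply/imsetP; exists f => //; rewrite inE (S _ Hf) Hff.
Qed.

Lemma chain_inP (T : finType) (R : rel T) (A : {set T}) (C : {set {set T}}) :
  reflect ((forall V, V \in C -> regular R V && (V \subset A)) /\
           (forall V W, V \in C -> W \in C -> (V \subset W) || (W \subset V)))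
          (chain_in R A C).
Proof.
apply: (iffP andP) => [[H1 H2] | [H1 H2]]; split.
- by move=> V HV; move/forallP: H1 => /(_ V); rewrite HV sub0set andbT.
- by move=> V W HV HW; move/forallP: H2 => /(_ V); rewrite HV /= => /forallP /(_ W); rewrite HW.
- by apply/forallP => V; apply/implyP => HV; rewrite sub0set andbT H1.
- by apply/forallP => V; apply/implyP => HV; apply/forallP => W; apply/implyP => HW; apply: H2.
Qed.

Lemma set0_regular (T : finType) (R : rel T) (hser : forall x : T, exists y : T, R x y) :
  regular R set0.
Proof.
apply/eqP/setP => x; rewrite !inE; symmetry; apply/negP => /subsetP H.
case: (hser x) => y Hy; have := H y; rewrite inRs Hy => /(_ isT).
by rewrite inE setI0 eqxx.
Qed.

Lemma h_mono (T : finType) (R : rel T) (A B : {set T}) : A \subset B -> h R A <= h R B.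
Proof.
move=> AB; apply/bigmax_leqP => C /chain_inP [H1 H2]; apply: leq_bigmax_cond.
apply/chain_inP; split=> // V HV; case/andP: (H1 V HV) => -> /= VA; exact: subset_trans AB.
Qed.

Lemma h_strict (T : finType) (R : rel T) (hser : forall x : T, exists y : T, R x y)
  (A B : {set T}) : regular R A -> B \proper A -> h R B < h R A.
Proof.
move=> HA /properP [BA [a HaA HaB]].
suff H : forall C, chain_in R B C -> #|C|.-1 < h R A.
  have H0 : 0 < h R A.
    have hc : chain_in R B set0 by apply/chain_inP; split=> [V|V W]; rewrite inE.
    by have := H _ hc; rewrite cards0.
  have : h R B <= (h R A).-1.
    by apply/bigmax_leqP => C HC; have := H C HC; case: (h R A).
  by move: H0; case: (h R A).
move=> C /chain_inP [H1 H2].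
set C0 := set0 |: C; set C1 := A |: C0.
have HAC0 : A \notin C0.
  rewrite !inE negb_or; apply/andP; split.
    by apply/eqP => E; move: HaA; rewrite E inE.
  apply/negP => HAC; case/andP: (H1 A HAC) => _ /subsetP /(_ a HaA); by rewrite (negbTE HaB).
have hC1 : chain_in R A C1.
  apply/chain_inP; split.
  - move=> V; rewrite !inE => /orP [/eqP -> | /orP [/eqP -> | HV]].
    + by rewrite HA subxx.
    + by rewrite set0_regular // sub0set.
    + case/andP: (H1 V HV) => -> /= VB; exact: subset_trans BA.
  - have sub : forall V, V \in C1 -> V \subset A.
      move=> V; rewrite !inE => /orP [/eqP -> | /orP [/eqP -> | HV]]; first exact: subxx.
        exact: sub0set.
      by case/andP: (H1 V HV) => _ VB; exact: subset_trans BA.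
    move=> V W HV HW.
    move: (HV) (HW); rewrite !inE => /orP [/eqP EV | /orP [/eqP EV | HV']].
    + by move=> _; rewrite EV (sub W HW) orbT.
    + by move=> _; rewrite EV sub0set.
    + move=> /orP [/eqP EW | /orP [/eqP EW | HW']].
      * by rewrite EW (sub V HV).
      * by rewrite EW sub0set orbT.
      * exact: H2.
have := @leq_bigmax_cond _ (chain_in R A) (fun C : {set {set T}} => #|C|.-1) _ hC1.
rewrite /C1 cardsU1 HAC0 => Hle.
apply: leq_trans Hle.
rewrite /C0 cardsU1; case: (boolP (set0 \in C)) => Hin /=.
  have : 0 < #|C| by apply/card_gt0P; exists set0.
  by case: #|C|.
by rewrite add1n; case: #|C|.
Qed.

Lemma h_upper (T : finType) (R : rel T) (hser : forall x : T, exists y : T, R x y)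
  (htr : transitive R) (W : {set T}) : h R W <= #|clusters R W|.
Proof.
apply/bigmax_leqP => C /chain_inP [H1 H2].
set s := [seq #|clusters R V| | V <- enum C].
have Hu : uniq s.
  rewrite map_inj_in_uniq ?enum_uniq // => V V'; rewrite !mem_enum => HV HV' E.
  case/andP: (H1 V HV) => rV _; case/andP: (H1 V' HV') => rV' _.
  apply: (clusters_inj hser htr rV rV'); apply/eqP.
  case/orP: (H2 V V' HV HV') => S.
    by rewrite eqEcard (clusters_mono R S) E leqnn.
  by rewrite eq_sym eqEcard (clusters_mono R S) E leqnn.
have Hs : {subset s <= iota 0 (#|clusters R W|.+1)}.
  move=> k /mapP [V HV ->]; rewrite mem_enum in HV.
  rewrite mem_iota /= add0n ltnS; apply: subset_leq_card; apply: clusters_mono.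
  by case/andP: (H1 V HV).
have := uniq_leq_size Hu Hs; rewrite size_map -cardE size_iota.
by case: #|C|.
Qed.

Definition regS (T : finType) (R : rel T) (S : {set {set T}}) : {set T} :=
  [set x | [forall f, (final R f && R x f) ==> (Rs R f \in S)]].

Lemma regSP (T : finType) (R : rel T) (S : {set {set T}}) x :
  reflect (forall f, final R f -> R x f -> Rs R f \in S) (x \in regS R S).
Proof.
rewrite inE; apply: (iffP forallP) => H f.
  by move=> Hf Hxf; move/implyP: (H f); rewrite Hf Hxf; apply.
by apply/implyP => /andP [Hf Hxf]; apply: H.
Qed.

Lemma regS_regular (T : finType) (R : rel T) (hser : forall x : T, exists y : T, R x y)
  (htr : transitive R) (S : {set {set T}}) : regular R (regS R S).
Proof.
apply/eqP/setP => x; rewrite [in RHS]inE; apply/idP/idP.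
- move/regSP => Hx; apply/subsetP => y; rewrite inRs => Hxy.
  case: (reach_final hser htr y) => f /andP [Hyf Hf].
  rewrite inE; apply/set0Pn; exists f; rewrite inE inRs Hyf /=.
  apply/regSP => g Hg Hfg; have [_ ->] := final_succ htr Hf Hfg.
  exact: Hx Hf (htr _ _ _ Hxy Hyf).
- move/subsetP => H; apply/regSP => f Hf Hxf.
  have := H f; rewrite inRs => /(_ Hxf); rewrite inE => /set0Pn [w].
  rewrite inE inRs => /andP [Hfw /regSP Hw].
  have := Hw f Hf ((elimT (finalP R f) Hf) w Hfw).
  done.
Qed.

Lemma h_lower_aux (T : finType) (R : rel T) (hser : forall x : T, exists y : T, R x y)
  (htr : transitive R) k : forall S : {set {set T}}, #|S| = k -> S \subset clusters R setT ->
  k <= h R (regS R S).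
Proof.
elim: k => [//|k IH] S HS Ssub.
have : 0 < #|S| by rewrite HS.
case/card_gt0P => c Hc.
move/subsetP: (Ssub) => /(_ c Hc) /imsetP [f]; rewrite inE => /andP [_ Hf] Ec.
have HS' : #|S :\ c| = k by move: HS; rewrite (cardsD1 c) Hc add1n => -[].
have IH' := IH (S :\ c) HS' (subset_trans (subD1set S c) Ssub).
apply: (leq_ltn_trans IH'); apply: (h_strict hser (regS_regular hser htr S)).
apply/properP; split.
  apply/subsetP => x /regSP Hx; apply/regSP => g Hg Hxg.
  by have := Hx g Hg Hxg; rewrite inE => /andP [].
exists f.
  apply/regSP => g Hg Hfg; have [_ ->] := final_succ htr Hf Hfg; by rewrite -Ec.
apply/negP => /regSP /(_ f Hf (final_refl hser htr Hf)).
by rewrite -Ec !inE eqxx.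
Qed.

Lemma h_lower (T : finType) (R : rel T) (hser : forall x : T, exists y : T, R x y)
  (htr : transitive R) (W : {set T}) : regular R W -> #|clusters R W| <= h R W.
Proof.
move=> HW.
apply: leq_trans (h_lower_aux hser htr (erefl _) (clusters_mono R (subsetT W))) _.
apply: h_mono; apply/subsetP => x /regSP Hx.
apply/(regP hser htr x HW) => f Hf Hxf.
by rewrite (final_mem_cl hser htr HW Hf); apply: Hx.
Qed.

Theorem proposition8 (T : finType) (R : rel T)
  (hne : 0 < #|T|)
  (hser : forall x : T, exists y : T, R x y)
  (htr : transitive R)
  (n : nat) (hn1 : 1 <= n) (hn2 : n <= h R [set: T])
  (X Y : {set T}) (hX : regular R X) (hY : regular R Y)
  (hXn : h R X = n) (hYn : h R Y = n - 1) :
  forall Z : {set T}, Y \proper Z -> Z \proper X -> rk R Z = h R X.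
Proof.
move=> Z YZ ZX.
have YsZ := proper_sub YZ; have ZsX := proper_sub ZX.
case/properP: YZ => _ [z HzZ HzY].
pose rep (c : {set T}) := odflt z [pick x in c].
have Hrep : forall c, c \in clusters R Y ->
    exists f, [/\ final R f, f \in Y, c = Rs R f & rep c \in c].
  move=> c /imsetP [f]; rewrite inE => /andP [HfY Hf] ->; exists f; split=> //.
  rewrite /rep; case: pickP => [x -> //|/(_ f)]; by rewrite inRs (final_refl hser htr Hf).
have Hrep2 : forall c, c \in clusters R Y ->
    [/\ final R (rep c), rep c \in Y & Rs R (rep c) = c].
  move=> c /Hrep [f [Hf HfY -> Hr]]; rewrite inRs in Hr.
  have [Hr1 Hr2] := final_succ htr Hf Hr; split=> //.
  by apply: (subsetP (cl_sub hser htr hY Hf HfY)); rewrite inRs.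
set I0 := rep @: clusters R Y; set I := z |: I0.
have HI0 : #|I0| = #|clusters R Y|.
  apply: card_in_imset => c c' Hc Hc' E.
  by have [_ _ <-] := Hrep2 c Hc; have [_ _ <-] := Hrep2 c' Hc'; rewrite E.
have HzI0 : z \notin I0.
  apply/negP => /imsetP [c Hc E]; have [_ HY _] := Hrep2 c Hc.
  by move: HzY; rewrite E HY.
have HI : #|I| = #|clusters R Y| + 1 by rewrite cardsU1 HzI0 HI0 addnC.
have HIZ : I \subset Z.
  apply/subsetP => x /setU1P [-> // | /imsetP [c Hc ->]].
  have [_ HY _] := Hrep2 c Hc; exact: (subsetP YsZ).
have Hind : indep R I.
  apply/forallP => W; apply/implyP => HW.
  apply: leq_trans (h_lower hser htr HW).
  have HI0W : #|I0 :&: W| <= #|clusters R Y :&: clusters R W|.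
    apply: (leq_trans _ (leq_imset_card rep _)); apply: subset_leq_card.
    apply/subsetP => x; rewrite inE => /andP [/imsetP [c Hc ->] HxW].
    apply/imsetP; exists c => //; rewrite inE Hc /=.
    have [Hf _ Ec] := Hrep2 c Hc; rewrite -Ec.
    by apply/imsetP; exists (rep c) => //; rewrite inE HxW Hf.
  case: (boolP (z \in W)) => HzW; last first.
    apply: leq_trans _ (leq_trans HI0W (subset_leq_card (subsetIr _ _))).
    apply: subset_leq_card; apply/subsetP => x; rewrite !inE => /andP [/orP [/eqP Ex | ->] HxW].
      by move: HzW; rewrite -Ex HxW.
    by rewrite HxW.
  have [f /andP [/andP [Hf Hzf] HfY]] : exists f, final R f && R z f && (f \notin Y).
    apply/existsP; apply: contraR HzY; rewrite negb_exists => /forallP H.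
    apply/(regP hser htr z hY) => f Hf Hzf; have := H f; rewrite Hf Hzf /=.
    by rewrite negbK.
  have HfW : f \in W by apply: (elimT (regP hser htr z HW) HzW) f Hf Hzf.
  have HcW : Rs R f \in clusters R W by rewrite -(final_mem_cl hser htr HW Hf).
  have HcY : Rs R f \notin clusters R Y by rewrite -(final_mem_cl hser htr hY Hf).
  rewrite (cardsD1 (Rs R f) (clusters R W)) HcW add1n.
  have : I :&: W \subset z |: (I0 :&: W).
    by apply/subsetP => x; rewrite !inE => /andP [/orP [-> | ->] ->] //; rewrite orbT.
  move/subset_leq_card => H; apply: (leq_trans H); rewrite cardsU1.
  apply: (leq_trans (leq_add (leq_b1 _) (leqnn _))); rewrite add1n ltnS.
  apply: (leq_trans HI0W); apply: subset_leq_card.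
  by apply/subsetP => c; rewrite !inE => /andP [Hc ->]; rewrite andbT; apply: contraNneq HcY => <-.
apply/eqP; rewrite eqn_leq; apply/andP; split.
  apply/bigmax_leqP => J /andP [JZ HJ].
  move/forallP: HJ => /(_ X); rewrite hX /=.
  by have /setIidPl -> := subset_trans JZ ZsX.
have : #|I| <= rk R Z by apply: leq_bigmax_cond; rewrite HIZ Hind.
apply: leq_trans; rewrite hXn HI.
have := h_upper hser htr Y; rewrite hYn.
by case: n hn1 {hXn hYn hn2} => // m _; rewrite subn1 /= addn1.
Qed.
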